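(* Let $r>1$ and let $n$ be a positive integer. Then $$C_{r^n}(1)\le \frac1n\cdot\frac{r}{r-1}.$$
   Context: For $s>1$, $\mathcal A_s=\{w\in\mathbb C: 1/s<|w|<s\}$. $C_s(1)$ denotes Carathéodory's infinitesimal metric of $\mathcal A_s$ at the point $1$ evaluated on the tangent vector $1$ (identifying tangent spaces with $\mathbb C$), i.e. $C_s(1)=\sup\{|g'(1)|: g:\mathcal A_s\to\Delta \text{ holomorphic},\ g(1)=0\}$, $\Delta$ the unit disc. *)

(* Defs.v *)
From Stdlib Require Import Reals.
From Coquelicot Require Import Coquelicot.
Open Scope R_scope.

Definition annulus (s : R) (w : C) : Prop := / s < Cmod w < s.

Definition unit_disc (w : C) : Prop := Cmod w < 1.

Definition holomorphic_on (U : C -> Prop) (g : C -> C) : Prop :=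
  forall z, U z -> ex_derive (K := C_AbsRing) g z.

Definition carath_values (s : R) (x : R) : Prop :=
  exists (g : C -> C) (d : C),
    holomorphic_on (annulus s) g /\
    (forall z, annulus s z -> unit_disc (g z)) /\
    g (RtoC 1) = RtoC 0 /\
    is_derive (K := C_AbsRing) g (RtoC 1) d /\
    x = Cmod d.

(* C_s(1) = sup { |g'(1)| : g : A_s -> Delta holomorphic, g(1) = 0 } (in Rbar). *)
Definition carath (s : R) : Rbar := Lub_Rbar (carath_values s).

(* Main.v *)
Require Import Defs.
From Stdlib Require Import Reals Lra Lia.
From Coquelicot Require Import Coquelicot.
Open Scope R_scope.

Lemma normCR (z : C) : @norm R_AbsRing C_R_NormedModule z = Cmod z.
Proof.
  destruct z as [a b]. unfold Cmod.
  change (sqrt (Rabs a ^ 2 + Rabs b ^ 2) = sqrt (a^2 + b^2)).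
  rewrite !pow2_abs. reflexivity.
Qed.

Lemma Cdiff_of_derive (f : C -> C) z l :
  is_derive (K := C_AbsRing) f z l ->
  forall eps, 0 < eps -> exists del, 0 < del /\ forall w, Cmod (w - z) < del ->
    Cmod (f w - f z - l * (w - z)) <= eps * Cmod (w - z).
Proof.
  intros [_ H] eps Heps.
  specialize (H z (fun P HP => HP) (mkposreal eps Heps)).
  destruct H as [del Hdel].
  exists del. split. apply cond_pos.
  intros w Hw. 
  specialize (Hdel w Hw).
  change (Cmod (f w - f z - (w - z) * l) <= eps * Cmod (w - z)) in Hdel.
  replace (f w - f z - l * (w - z))%C with (f w - f z - (w - z) * l)%C by ring.
  exact Hdel.
Qed.

Lemma derive_of_Cdiff (f : C -> C) z l :
  (forall eps, 0 < eps -> exists del, 0 < del /\ forall w, Cmod (w - z) < del ->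
    Cmod (f w - f z - l * (w - z)) <= eps * Cmod (w - z)) ->
  is_derive (K := C_AbsRing) f z l.
Proof.
  intros H. split. apply is_linear_scal_l.
  intros x Hx. apply (@is_filter_lim_locally_unique _ (AbsRing_NormedModule C_AbsRing)) in Hx. subst x.
  intros eps. destruct (H eps (cond_pos eps)) as [del [Hd H2]].
  exists (mkposreal del Hd).
  intros w Hw. change (Cmod (w - z) < del) in Hw.
  change (Cmod (f w - f z - (w - z) * l) <= eps * Cmod (w - z)).
  replace (f w - f z - (w - z) * l)%C with (f w - f z - l * (w - z))%C by ring.
  apply H2. exact Hw.
Qed.

Lemma Cmod_sub_ge (w z : C) : Cmod z - Cmod (w - z) <= Cmod w.
Proof.
  assert (H := Cmod_triangle w (z - w)%C).
  replace (w + (z - w))%C with z in H by ring.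
  replace (z - w)%C with (- (w - z))%C in H by ring. rewrite Cmod_opp in H. lra.
Qed.

Lemma is_derive_Cinv (z : C) : z <> 0%C ->
  is_derive (K := C_AbsRing) (fun w => / w)%C z (- (/ z * / z))%C.
Proof.
  intros Hz. apply derive_of_Cdiff. intros eps Heps.
  assert (Hc : 0 < Cmod z) by (apply Cmod_gt_0; auto).
  exists (Rmin (Cmod z / 2) (eps * Cmod z ^ 3 / 2)). split.
  { apply Rmin_pos; [lra|]. apply Rmult_lt_0_compat; [|lra]. apply Rmult_lt_0_compat; auto. apply pow_lt; auto. }
  intros w Hw.
  assert (Hw1 : Cmod (w - z) < Cmod z / 2) by (eapply Rlt_le_trans; [exact Hw| apply Rmin_l]).
  assert (Hw2 : Cmod (w - z) < eps * Cmod z ^ 3 / 2) by (eapply Rlt_le_trans; [exact Hw| apply Rmin_r]).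
  assert (Hm := Cmod_sub_ge w z).
  assert (Hwm : 0 < Cmod w) by lra.
  assert (Hw0 : w <> 0%C) by (apply Cmod_gt_0; auto).
  replace (/ w - / z - - (/ z * / z) * (w - z))%C with ((w - z) * (w - z) * (/ w * / z * / z))%C
    by (field; auto).
  rewrite !Cmod_mult, !Cmod_inv by auto.
  set (a := Cmod (w - z)) in *. set (m := Cmod w) in *. set (c := Cmod z) in *.
  assert (Ha : 0 <= a) by apply Cmod_ge_0.
  rewrite Rmult_assoc. rewrite (Rmult_comm eps). apply Rmult_le_compat_l; auto.
  assert (a * (/ m * / c * / c) = a / (m * c * c)) by (field; lra). rewrite H.
  apply Rle_trans with (a / (c / 2 * c * c)).
  { apply Rmult_le_compat_l; auto. apply Rinv_le_contravar. 
    repeat apply Rmult_lt_0_compat; lra. apply Rmult_le_compat_r; [lra|]. apply Rmult_le_compat_r; lra. }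
  apply Rmult_le_reg_r with (c / 2 * c * c). repeat apply Rmult_lt_0_compat; lra.
  unfold Rdiv at 1. rewrite Rmult_assoc, Rinv_l by (apply Rgt_not_eq; repeat apply Rmult_lt_0_compat; lra).
  simpl in Hw2. nra.
Qed.

Definition Ccont (f : C -> C) (z : C) : Prop :=
  forall eps, 0 < eps -> exists del, 0 < del /\ forall w, Cmod (w - z) < del -> Cmod (f w - f z) < eps.

Lemma Ccont_of_derive f z l : is_derive (K := C_AbsRing) f z l -> Ccont f z.
Proof.
  intros H eps Heps.
  destruct (Cdiff_of_derive f z l H 1 Rlt_0_1) as [d [Hd H1]].
  exists (Rmin d (eps / (Cmod l + 2))). split.
  { apply Rmin_pos; auto. apply Rdiv_lt_0_compat; auto. assert (0 <= Cmod l) by apply Cmod_ge_0. lra. }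
  intros w Hw.
  assert (Hw1 : Cmod (w - z) < d) by (eapply Rlt_le_trans; [exact Hw| apply Rmin_l]).
  assert (Hw2 : Cmod (w - z) < eps / (Cmod l + 2)) by (eapply Rlt_le_trans; [exact Hw| apply Rmin_r]).
  specialize (H1 w Hw1).
  replace (f w - f z)%C with ((f w - f z - l * (w - z)) + l * (w - z))%C by ring.
  eapply Rle_lt_trans. apply Cmod_triangle. rewrite Cmod_mult.
  assert (0 <= Cmod l) by apply Cmod_ge_0. assert (0 <= Cmod (w - z)) by apply Cmod_ge_0.
  apply Rmult_lt_compat_r with (r := Cmod l + 2) in Hw2; [|lra].
  unfold Rdiv in Hw2. rewrite Rmult_assoc, Rinv_l in Hw2 by lra. nra.
Qed.

Lemma cont_h (f : C -> C) x y : Ccont f (x, y) ->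
  @continuous R_UniformSpace C_R_NormedModule (fun t => f (t, y)) x.
Proof.
  intros H. apply filterlim_locally. intros eps.
  destruct (H eps (cond_pos eps)) as [d [Hd H1]].
  exists (mkposreal d Hd). intros t Ht. apply norm_compat1. rewrite normCR.
  apply H1. change (Rabs (t - x) < d) in Ht.
  replace ((t, y) - (x, y))%C with (RtoC (t - x)). rewrite Cmod_R. exact Ht.
  unfold RtoC, Cminus, Cplus, Copp; simpl. f_equal; ring.
Qed.

Lemma cont_v (f : C -> C) x y : Ccont f (x, y) ->
  @continuous R_UniformSpace C_R_NormedModule (fun t => f (x, t)) y.
Proof.
  intros H. apply filterlim_locally. intros eps.
  destruct (H eps (cond_pos eps)) as [d [Hd H1]].
  exists (mkposreal d Hd). intros t Ht. apply norm_compat1. rewrite normCR.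
  apply H1. change (Rabs (t - y) < d) in Ht.
  replace ((x, t) - (x, y))%C with (Ci * RtoC (t - y))%C. rewrite Cmod_mult, Cmod_Ci, Cmod_R. lra.
  unfold RtoC, Cminus, Cplus, Copp, Cmult, Ci; simpl. f_equal; ring.
Qed.

Lemma ex_h (f : C -> C) y x1 x2 : x1 <= x2 -> (forall x, x1 <= x <= x2 -> Ccont f (x, y)) ->
  ex_RInt (V := C_R_CompleteNormedModule) (fun x => f (x, y)) x1 x2.
Proof.
  intros Hx H. apply ex_RInt_continuous. intros z Hz. rewrite Rmin_left, Rmax_right in Hz by lra.
  apply cont_h. apply H. lra.
Qed.

Lemma ex_v (f : C -> C) x y1 y2 : y1 <= y2 -> (forall y, y1 <= y <= y2 -> Ccont f (x, y)) ->
  ex_RInt (V := C_R_CompleteNormedModule) (fun y => f (x, y)) y1 y2.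
Proof.
  intros Hx H. apply ex_RInt_continuous. intros z Hz. rewrite Rmin_left, Rmax_right in Hz by lra.
  apply cont_v. apply H. lra.
Qed.

Definition hI (f : C -> C) (y x1 x2 : R) : C := RInt (V := C_R_CompleteNormedModule) (fun x => f (x, y)) x1 x2.
Definition vI (f : C -> C) (x y1 y2 : R) : C := (Ci * RInt (V := C_R_CompleteNormedModule) (fun y => f (x, y)) y1 y2)%C.
Definition B (f : C -> C) x1 x2 y1 y2 : C := (hI f y1 x1 x2 + vI f x2 y1 y2 - hI f y2 x1 x2 - vI f x1 y1 y2)%C.

Lemma B_splitx f x1 m x2 y1 y2 :
  ex_RInt (V := C_R_CompleteNormedModule) (fun x => f (x, y1)) x1 m ->
  ex_RInt (V := C_R_CompleteNormedModule) (fun x => f (x, y1)) m x2 ->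
  ex_RInt (V := C_R_CompleteNormedModule) (fun x => f (x, y2)) x1 m ->
  ex_RInt (V := C_R_CompleteNormedModule) (fun x => f (x, y2)) m x2 ->
  B f x1 x2 y1 y2 = (B f x1 m y1 y2 + B f m x2 y1 y2)%C.
Proof.
  intros H1 H2 H3 H4. unfold B, hI.
  rewrite <- (RInt_Chasles _ x1 m x2 H1 H2), <- (RInt_Chasles _ x1 m x2 H3 H4).
  change plus with Cplus. ring.
Qed.

Lemma B_splity f x1 x2 y1 m y2 :
  ex_RInt (V := C_R_CompleteNormedModule) (fun y => f (x1, y)) y1 m ->
  ex_RInt (V := C_R_CompleteNormedModule) (fun y => f (x1, y)) m y2 ->
  ex_RInt (V := C_R_CompleteNormedModule) (fun y => f (x2, y)) y1 m ->
  ex_RInt (V := C_R_CompleteNormedModule) (fun y => f (x2, y)) m y2 ->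
  B f x1 x2 y1 y2 = (B f x1 x2 y1 m + B f x1 x2 m y2)%C.
Proof.
  intros H1 H2 H3 H4. unfold B, vI.
  rewrite <- (RInt_Chasles _ y1 m y2 H1 H2), <- (RInt_Chasles _ y1 m y2 H3 H4).
  change plus with Cplus. ring.
Qed.

Lemma lin_int a b x1 x2 : is_RInt (V := R_NormedModule) (fun x => a + b * x) x1 x2 (a * (x2 - x1) + b * (x2 ^ 2 - x1 ^ 2) / 2).
Proof.
  replace (a * (x2 - x1) + b * (x2 ^ 2 - x1 ^ 2) / 2) with
    (minus ((fun x => a * x + b * x ^ 2 / 2) x2) ((fun x => a * x + b * x ^ 2 / 2) x1)).
  2:{ unfold minus, plus, opp; simpl. field. }
  apply (is_RInt_derive (V := R_CompleteNormedModule) (fun x => a * x + b * x ^ 2 / 2) (fun x => a + b * x)).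
  - intros x _. auto_derive. auto. field.
  - intros x _. apply (ex_derive_continuous (K := R_AbsRing) (V := R_NormedModule) (fun x => a + b * x)).
    auto_derive. auto.
Qed.

Lemma pair_int (g : R -> C) x1 x2 u v :
  is_RInt (V := R_NormedModule) (fun t => fst (g t)) x1 x2 u ->
  is_RInt (V := R_NormedModule) (fun t => snd (g t)) x1 x2 v ->
  is_RInt (V := C_R_NormedModule) g x1 x2 (u, v).
Proof.
  intros H1 H2. apply (is_RInt_fct_extend_pair (U := R_NormedModule) (V := R_NormedModule)); auto.
Qed.

Lemma is_aff_h (al l : C) y x1 x2 :
  is_RInt (V := C_R_NormedModule) (fun x => al + l * (x, y))%C x1 x2
  ((fst al - snd l * y) * (x2 - x1) + fst l * (x2 ^ 2 - x1 ^ 2) / 2,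
   (snd al + fst l * y) * (x2 - x1) + snd l * (x2 ^ 2 - x1 ^ 2) / 2).
Proof.
  apply pair_int.
  - eapply is_RInt_ext; [|apply lin_int]. intros x _. simpl. ring.
  - eapply is_RInt_ext; [|apply lin_int]. intros x _. simpl. ring.
Qed.

Lemma is_aff_v (al l : C) x y1 y2 :
  is_RInt (V := C_R_NormedModule) (fun y => al + l * (x, y))%C y1 y2
  ((fst al + fst l * x) * (y2 - y1) + (- snd l) * (y2 ^ 2 - y1 ^ 2) / 2,
   (snd al + snd l * x) * (y2 - y1) + fst l * (y2 ^ 2 - y1 ^ 2) / 2).
Proof.
  apply pair_int.
  - eapply is_RInt_ext; [|apply lin_int]. intros t _. simpl. ring.
  - eapply is_RInt_ext; [|apply lin_int]. intros t _. simpl. ring.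
Qed.

Lemma aff_h (al l : C) y x1 x2 :
  hI (fun z => al + l * z)%C y x1 x2 =
  ((fst al - snd l * y) * (x2 - x1) + fst l * (x2 ^ 2 - x1 ^ 2) / 2,
   (snd al + fst l * y) * (x2 - x1) + snd l * (x2 ^ 2 - x1 ^ 2) / 2).
Proof. apply (is_RInt_unique (V := C_R_CompleteNormedModule)). apply is_aff_h. Qed.

Lemma aff_v (al l : C) x y1 y2 :
  RInt (V := C_R_CompleteNormedModule) (fun y => al + l * (x, y))%C y1 y2 =
  ((fst al + fst l * x) * (y2 - y1) + (- snd l) * (y2 ^ 2 - y1 ^ 2) / 2,
   (snd al + snd l * x) * (y2 - y1) + fst l * (y2 ^ 2 - y1 ^ 2) / 2).
Proof. apply (is_RInt_unique (V := C_R_CompleteNormedModule)). apply is_aff_v. Qed.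

Lemma B_aff (al l : C) x1 x2 y1 y2 : B (fun z => al + l * z)%C x1 x2 y1 y2 = 0%C.
Proof.
  unfold B, vI. rewrite !aff_h, !aff_v.
  destruct al as [a1 a2], l as [l1 l2]. unfold Ci, Cmult, Cplus, Cminus, Copp. simpl.
  unfold Cplus, RtoC; simpl; f_equal; field.
Qed.

Lemma is_RInt_Cmult (g : R -> C) a b I (c : C) :
  is_RInt (V := C_R_NormedModule) g a b I ->
  is_RInt (V := C_R_NormedModule) (fun t => c * g t)%C a b (c * I)%C.
Proof.
  intros H.
  assert (H1 := is_RInt_fct_extend_fst (U := R_NormedModule) (V := R_NormedModule) _ _ _ _ H).
  assert (H2 := is_RInt_fct_extend_snd (U := R_NormedModule) (V := R_NormedModule) _ _ _ _ H).
  destruct c as [c1 c2]. unfold Cmult. simpl. apply pair_int; simpl.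
  - exact (is_RInt_minus (V := R_NormedModule) _ _ _ _ _ _ (is_RInt_scal _ _ _ c1 _ H1) (is_RInt_scal _ _ _ c2 _ H2)).
  - exact (is_RInt_plus (V := R_NormedModule) _ _ _ _ _ _ (is_RInt_scal _ _ _ c1 _ H2) (is_RInt_scal _ _ _ c2 _ H1)).
Qed.

Definition Eint (f : C -> C) x1 x2 y1 y2 : Prop :=
  ex_RInt (V := C_R_CompleteNormedModule) (fun x => f (x, y1)) x1 x2 /\
  ex_RInt (V := C_R_CompleteNormedModule) (fun x => f (x, y2)) x1 x2 /\
  ex_RInt (V := C_R_CompleteNormedModule) (fun y => f (x1, y)) y1 y2 /\
  ex_RInt (V := C_R_CompleteNormedModule) (fun y => f (x2, y)) y1 y2.

Lemma RInt_minus_C (f g : R -> C) a b :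
  ex_RInt (V := C_R_CompleteNormedModule) f a b ->
  ex_RInt (V := C_R_CompleteNormedModule) g a b ->
  RInt (V := C_R_CompleteNormedModule) (fun t => f t - g t)%C a b =
  (RInt (V := C_R_CompleteNormedModule) f a b - RInt (V := C_R_CompleteNormedModule) g a b)%C.
Proof.
  intros H1 H2. apply (is_RInt_unique (V := C_R_CompleteNormedModule)).
  exact (is_RInt_minus (V := C_R_NormedModule) _ _ _ _ _ _ (RInt_correct _ _ _ H1) (RInt_correct _ _ _ H2)).
Qed.

Lemma B_minus f g x1 x2 y1 y2 : Eint f x1 x2 y1 y2 -> Eint g x1 x2 y1 y2 ->
  B (fun z => f z - g z)%C x1 x2 y1 y2 = (B f x1 x2 y1 y2 - B g x1 x2 y1 y2)%C.
Proof.
  intros [F1 [F2 [F3 F4]]] [G1 [G2 [G3 G4]]]. unfold B, hI, vI.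
  rewrite (RInt_minus_C (fun x => f (x, y1)) (fun x => g (x, y1))) by auto.
  rewrite (RInt_minus_C (fun x => f (x, y2)) (fun x => g (x, y2))) by auto.
  rewrite (RInt_minus_C (fun y => f (x1, y)) (fun y => g (x1, y))) by auto.
  rewrite (RInt_minus_C (fun y => f (x2, y)) (fun y => g (x2, y))) by auto.
  ring.
Qed.

Lemma Eint_aff al l x1 x2 y1 y2 : Eint (fun z => al + l * z)%C x1 x2 y1 y2.
Proof.
  repeat split; eexists; [apply is_aff_h|apply is_aff_h|apply is_aff_v|apply is_aff_v].
Qed.

Lemma RInt_norm_bound (f : R -> C) a b M : a <= b ->
  ex_RInt (V := C_R_CompleteNormedModule) f a b ->
  (forall t, a <= t <= b -> Cmod (f t) <= M) ->
  Cmod (RInt (V := C_R_CompleteNormedModule) f a b) <= (b - a) * M.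
Proof.
  intros Hab Hex H. rewrite <- normCR.
  apply (norm_RInt_le_const (V := C_R_NormedModule) f a b); auto.
  intros t Ht. rewrite normCR. auto.
  apply (RInt_correct (V := C_R_CompleteNormedModule)). auto.
Qed.

Lemma Cmod_4 (a b c d : C) : Cmod (a + b - c - d) <= Cmod a + Cmod b + Cmod c + Cmod d.
Proof.
  unfold Cminus. eapply Rle_trans. apply Cmod_triangle. rewrite Cmod_opp.
  apply Rplus_le_compat_r. eapply Rle_trans. apply Cmod_triangle. rewrite Cmod_opp.
  apply Rplus_le_compat_r. apply Cmod_triangle.
Qed.

Lemma B_bound f x1 x2 y1 y2 M : x1 <= x2 -> y1 <= y2 -> Eint f x1 x2 y1 y2 ->
  (forall x, x1 <= x <= x2 -> Cmod (f (x, y1)) <= M /\ Cmod (f (x, y2)) <= M) ->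
  (forall y, y1 <= y <= y2 -> Cmod (f (x1, y)) <= M /\ Cmod (f (x2, y)) <= M) ->
  Cmod (B f x1 x2 y1 y2) <= 2 * ((x2 - x1) + (y2 - y1)) * M.
Proof.
  intros Hx Hy [F1 [F2 [F3 F4]]] Hh Hv. unfold B, hI, vI.
  eapply Rle_trans. apply Cmod_4. rewrite !Cmod_mult, !Cmod_Ci, !Rmult_1_l.
  assert (A1 := RInt_norm_bound _ _ _ M Hx F1 (fun t Ht => proj1 (Hh t Ht))).
  assert (A2 := RInt_norm_bound _ _ _ M Hx F2 (fun t Ht => proj2 (Hh t Ht))).
  assert (A3 := RInt_norm_bound _ _ _ M Hy F3 (fun t Ht => proj1 (Hv t Ht))).
  assert (A4 := RInt_norm_bound _ _ _ M Hy F4 (fun t Ht => proj2 (Hv t Ht))).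
  lra.
Qed.

Record rect := mkR { ra : R; rb : R; rc : R; rd : R }.

Definition BR f r := B f (ra r) (rb r) (rc r) (rd r).

Definition step (f : C -> C) (r : rect) : rect :=
  let m := (ra r + rb r) / 2 in let m' := (rc r + rd r) / 2 in
  let q1 := mkR (ra r) m (rc r) m' in
  let q2 := mkR m (rb r) (rc r) m' in
  let q3 := mkR (ra r) m m' (rd r) in
  let q4 := mkR m (rb r) m' (rd r) in
  if Rle_dec (Cmod (BR f r)) (4 * Cmod (BR f q1)) then q1 else
  if Rle_dec (Cmod (BR f r)) (4 * Cmod (BR f q2)) then q2 else
  if Rle_dec (Cmod (BR f r)) (4 * Cmod (BR f q3)) then q3 else q4.

Definition inrect X1 X2 Y1 Y2 (r : rect) : Prop :=
  X1 <= ra r <= rb r /\ rb r <= X2 /\ Y1 <= rc r <= rd r /\ rd r <= Y2.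

Lemma Eint_sub f X1 X2 Y1 Y2 :
  (forall x y, X1 <= x <= X2 -> Y1 <= y <= Y2 -> Ccont f (x, y)) ->
  forall a b c d, X1 <= a <= b -> b <= X2 -> Y1 <= c <= d -> d <= Y2 -> Eint f a b c d.
Proof.
  intros H a b c d H1 H2 H3 H4. repeat split.
  - apply ex_h. lra. intros. apply H; lra.
  - apply ex_h. lra. intros. apply H; lra.
  - apply ex_v. lra. intros. apply H; lra.
  - apply ex_v. lra. intros. apply H; lra.
Qed.

Lemma B_splitx' f x1 m x2 y1 y2 : x1 <= m <= x2 ->
  (forall x, x1 <= x <= x2 -> Ccont f (x, y1) /\ Ccont f (x, y2)) ->
  B f x1 x2 y1 y2 = (B f x1 m y1 y2 + B f m x2 y1 y2)%C.
Proof.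
  intros Hm H. apply B_splitx; apply ex_h; try lra; intros; apply H; lra.
Qed.

Lemma B_splity' f x1 x2 y1 m y2 : y1 <= m <= y2 ->
  (forall y, y1 <= y <= y2 -> Ccont f (x1, y) /\ Ccont f (x2, y)) ->
  B f x1 x2 y1 y2 = (B f x1 x2 y1 m + B f x1 x2 m y2)%C.
Proof.
  intros Hm H. apply B_splity; apply ex_v; try lra; intros; apply H; lra.
Qed.

Lemma quad f X1 X2 Y1 Y2 :
  (forall x y, X1 <= x <= X2 -> Y1 <= y <= Y2 -> Ccont f (x, y)) ->
  forall r, inrect X1 X2 Y1 Y2 r ->
  let m := (ra r + rb r) / 2 in let m' := (rc r + rd r) / 2 in
  BR f r = (BR f (mkR (ra r) m (rc r) m') + BR f (mkR m (rb r) (rc r) m') +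
            BR f (mkR (ra r) m m' (rd r)) + BR f (mkR m (rb r) m' (rd r)))%C.
Proof.
  intros H [a b c d] Hr m m'. unfold inrect in Hr; cbn [ra rb rc rd] in *. unfold BR; cbn [ra rb rc rd].
  assert (Hm : a <= m <= b) by (unfold m; lra).
  assert (Hm' : c <= m' <= d) by (unfold m'; lra).
  clearbody m m'.
  rewrite (B_splity' f a b c m' d) by (auto; intros; split; apply H; lra).
  rewrite (B_splitx' f a m b c m') by (auto; intros; split; apply H; lra).
  rewrite (B_splitx' f a m b m' d) by (auto; intros; split; apply H; lra).
  ring.
Qed.

Lemma step_spec f X1 X2 Y1 Y2 :
  (forall x y, X1 <= x <= X2 -> Y1 <= y <= Y2 -> Ccont f (x, y)) ->
  forall r, inrect X1 X2 Y1 Y2 r ->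
  let s := step f r in
  ra r <= ra s /\ rb s <= rb r /\ rc r <= rc s /\ rd s <= rd r /\
  rb s - ra s = (rb r - ra r) / 2 /\ rd s - rc s = (rd r - rc r) / 2 /\
  Cmod (BR f r) <= 4 * Cmod (BR f s).
Proof.
  intros H r Hr s. assert (Q := quad f X1 X2 Y1 Y2 H r Hr). cbv zeta in Q.
  destruct r as [a b c d]. unfold inrect in Hr; cbn [ra rb rc rd] in *.
  set (m := (a + b) / 2) in *. set (m' := (c + d) / 2) in *.
  set (r := mkR a b c d) in *.
  set (A := BR f (mkR a m c m')) in *.
  set (B' := BR f (mkR m b c m')) in *.
  set (C' := BR f (mkR a m m' d)) in *.
  set (D := BR f (mkR m b m' d)) in *.
  assert (T: Cmod (BR f r) <= Cmod A + Cmod B' + Cmod C' + Cmod D).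
  { rewrite Q. eapply Rle_trans. apply Cmod_triangle. apply Rplus_le_compat_r.
    eapply Rle_trans. apply Cmod_triangle. apply Rplus_le_compat_r. apply Cmod_triangle. }
  clear Q.
  change s with (if Rle_dec (Cmod (BR f r)) (4 * Cmod A) then mkR a m c m' else
    if Rle_dec (Cmod (BR f r)) (4 * Cmod B') then mkR m b c m' else
    if Rle_dec (Cmod (BR f r)) (4 * Cmod C') then mkR a m m' d else mkR m b m' d).
  clearbody s.
  destruct (Rle_dec _ _) as [h1|h1]. { fold A. cbn [ra rb rc rd]. unfold m, m'. repeat split; lra. }
  destruct (Rle_dec _ _) as [h2|h2]. { fold B'. cbn [ra rb rc rd]. unfold m, m'. repeat split; lra. }
  destruct (Rle_dec _ _) as [h3|h3]. { fold C'. cbn [ra rb rc rd]. unfold m, m'. repeat split; lra. }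
  fold D. cbn [ra rb rc rd]. unfold m, m'. repeat split; lra.
Qed.

Lemma Cmod_le_abs a b : Cmod (a, b) <= Rabs a + Rabs b.
Proof.
  unfold Cmod. cbn [fst snd].
  rewrite <- (sqrt_Rsqr (Rabs a + Rabs b)) by (assert (0 <= Rabs a) by apply Rabs_pos; assert (0 <= Rabs b) by apply Rabs_pos; lra).
  apply sqrt_le_1_alt. unfold Rsqr.
  assert (0 <= Rabs a) by apply Rabs_pos. assert (0 <= Rabs b) by apply Rabs_pos.
  replace (a ^ 2) with (Rabs a * Rabs a) by (rewrite <- Rabs_mult; simpl; rewrite Rmult_1_r; apply Rabs_right; nra).
  replace (b ^ 2) with (Rabs b * Rabs b) by (rewrite <- Rabs_mult; simpl; rewrite Rmult_1_r; apply Rabs_right; nra).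
  nra.
Qed.

Lemma INR_le_pow2 k : INR k <= 2 ^ k.
Proof.
  induction k. simpl; lra. rewrite S_INR. simpl. assert (1 <= 2 ^ k) by (apply pow_R1_Rle; lra). lra.
Qed.

Definition seqR f r0 k := Nat.iter k (step f) r0.

Lemma seq_inv f X1 X2 Y1 Y2 : X1 <= X2 -> Y1 <= Y2 ->
  (forall x y, X1 <= x <= X2 -> Y1 <= y <= Y2 -> Ccont f (x, y)) ->
  forall k, let r := seqR f (mkR X1 X2 Y1 Y2) k in
  inrect X1 X2 Y1 Y2 r /\ rb r - ra r = (X2 - X1) / 2 ^ k /\ rd r - rc r = (Y2 - Y1) / 2 ^ k /\
  Cmod (BR f (mkR X1 X2 Y1 Y2)) <= 2 ^ k * 2 ^ k * Cmod (BR f r).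
Proof.
  intros HX HY H k. induction k as [|k IH]; intros r.
  - unfold r; simpl. unfold inrect; simpl. repeat split; try lra. 
  - destruct IH as [I1 [I2 [I3 I4]]].
    assert (S := step_spec f X1 X2 Y1 Y2 H _ I1). cbv zeta in S.
    change r with (step f (seqR f (mkR X1 X2 Y1 Y2) k)).
    set (r' := seqR f (mkR X1 X2 Y1 Y2) k) in *.
    destruct S as [S1 [S2 [S3 [S4 [S5 [S6 S7]]]]]].
    unfold inrect in *.
    assert (P : 0 < 2 ^ k) by (apply pow_lt; lra).
    repeat split; try lra.
    + rewrite S5, I2. simpl. field. lra.
    + rewrite S6, I3. simpl. field. lra.
    + eapply Rle_trans. apply I4. simpl.
      assert (0 <= 2 ^ k * 2 ^ k) by nra. nra.
Qed.

Lemma seq_mono f X1 X2 Y1 Y2 : X1 <= X2 -> Y1 <= Y2 ->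
  (forall x y, X1 <= x <= X2 -> Y1 <= y <= Y2 -> Ccont f (x, y)) ->
  forall k j, let r := seqR f (mkR X1 X2 Y1 Y2) k in let s := seqR f (mkR X1 X2 Y1 Y2) (j + k) in
  ra r <= ra s /\ rb s <= rb r /\ rc r <= rc s /\ rd s <= rd r.
Proof.
  intros HX HY H k j. induction j as [|j IH]; intros r s.
  - simpl in s. unfold s, r. lra.
  - destruct IH as [I1 [I2 [I3 I4]]].
    destruct (seq_inv f X1 X2 Y1 Y2 HX HY H (j + k)) as [J _].
    assert (S := step_spec f X1 X2 Y1 Y2 H _ J). cbv zeta in S.
    change s with (step f (seqR f (mkR X1 X2 Y1 Y2) (j + k))).
    destruct S as [S1 [S2 [S3 [S4 _]]]]. unfold r in *. lra.
Qed.

Lemma B_minus_Eint f g x1 x2 y1 y2 : Eint f x1 x2 y1 y2 -> Eint g x1 x2 y1 y2 ->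
  Eint (fun z => f z - g z)%C x1 x2 y1 y2.
Proof.
  intros [F1 [F2 [F3 F4]]] [G1 [G2 [G3 G4]]].
  repeat split; apply (ex_RInt_minus (V := C_R_NormedModule)); auto.
Qed.

Lemma nested (a b : nat -> R) : (forall m k, a m <= b k) -> exists x, forall k, a k <= x <= b k.
Proof.
  intros H.
  destruct (completeness (fun x => exists k, x = a k)) as [l [Hl1 Hl2]].
  - exists (b 0%nat). intros x [k ->]. apply H.
  - exists (a 0%nat). exists 0%nat. auto.
  - exists l. intros k. split.
    + apply Hl1. exists k. auto.
    + apply Hl2. intros x [m ->]. apply H.
Qed.

Lemma seq_cross f X1 X2 Y1 Y2 : X1 <= X2 -> Y1 <= Y2 ->
  (forall x y, X1 <= x <= X2 -> Y1 <= y <= Y2 -> Ccont f (x, y)) ->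
  forall m k, ra (seqR f (mkR X1 X2 Y1 Y2) m) <= rb (seqR f (mkR X1 X2 Y1 Y2) k) /\
              rc (seqR f (mkR X1 X2 Y1 Y2) m) <= rd (seqR f (mkR X1 X2 Y1 Y2) k).
Proof.
  intros HX HY H m k.
  destruct (seq_inv f X1 X2 Y1 Y2 HX HY H m) as [Im _].
  destruct (seq_inv f X1 X2 Y1 Y2 HX HY H k) as [Ik _]. unfold inrect in *.
  destruct (Nat.le_gt_cases m k) as [Hmk|Hmk].
  - replace k with ((k - m) + m)%nat in * by lia.
    destruct (seq_mono f X1 X2 Y1 Y2 HX HY H m (k - m)) as [A [B' [C' D]]]. cbv zeta in *. lra.
  - replace m with ((m - k) + k)%nat in * by lia.
    destruct (seq_mono f X1 X2 Y1 Y2 HX HY H k (m - k)) as [A [B' [C' D]]]. cbv zeta in *. lra.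
Qed.

Lemma goursat f X1 X2 Y1 Y2 : X1 <= X2 -> Y1 <= Y2 ->
  (forall x y, X1 <= x <= X2 -> Y1 <= y <= Y2 -> ex_derive (K := C_AbsRing) f (x, y)) ->
  B f X1 X2 Y1 Y2 = 0%C.
Proof.
  intros HX HY HD.
  assert (H : forall x y, X1 <= x <= X2 -> Y1 <= y <= Y2 -> Ccont f (x, y)).
  { intros x y Hx Hy. destruct (HD x y Hx Hy) as [l Hl]. eapply Ccont_of_derive; eauto. }
  set (sq := seqR f (mkR X1 X2 Y1 Y2)).
  destruct (nested (fun k => ra (sq k)) (fun k => rb (sq k))) as [xs Hxs].
  { intros m k. apply (seq_cross f X1 X2 Y1 Y2 HX HY H m k). }
  destruct (nested (fun k => rc (sq k)) (fun k => rd (sq k))) as [ys Hys].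
  { intros m k. apply (seq_cross f X1 X2 Y1 Y2 HX HY H m k). }
  set (W := X2 - X1). set (L := Y2 - Y1).
  assert (Main : forall eps, 0 < eps -> Cmod (B f X1 X2 Y1 Y2) <= 2 * eps * (W + L) ^ 2).
  { intros eps Heps.
    destruct (seq_inv f X1 X2 Y1 Y2 HX HY H 0) as [I0 _].
    assert (Hxy : X1 <= xs <= X2 /\ Y1 <= ys <= Y2).
    { specialize (Hxs 0%nat). specialize (Hys 0%nat). unfold inrect in I0. simpl in *. lra. }
    destruct (HD xs ys (proj1 Hxy) (proj2 Hxy)) as [l Hl].
    destruct (Cdiff_of_derive f (xs, ys) l Hl eps Heps) as [del [Hdel Hd]].
    destruct (archimed_cor1 (del / (W + L + 1))) as [k [Hk Hk0]].
    { apply Rdiv_lt_0_compat; auto. unfold W, L; lra. }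
    destruct (seq_inv f X1 X2 Y1 Y2 HX HY H k) as [Ik [Iw [Il Ib]]].
    fold sq in Ik, Iw, Il, Ib.
    set (r := sq k) in *.
    assert (P : 0 < 2 ^ k) by (apply pow_lt; lra).
    assert (Hk' : (W + L) / 2 ^ k < del).
    { assert (INR k <= 2 ^ k) by apply INR_le_pow2.
      assert (0 < INR k) by (apply lt_0_INR; lia).
      apply Rle_lt_trans with ((W + L + 1) / INR k).
      - unfold Rdiv. apply Rmult_le_compat. unfold W, L; lra.
        left; apply Rinv_0_lt_compat; auto. lra. apply Rinv_le_contravar; auto.
      - apply Rmult_lt_reg_r with (/ (W + L + 1)). apply Rinv_0_lt_compat. unfold W, L; lra.
        replace ((W + L + 1) / INR k * / (W + L + 1)) with (/ INR k) by (field; unfold W, L; lra).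
        exact Hk. }
    set (al := (f (xs, ys) - l * (xs, ys))%C).
    set (g := fun z => (f z - (al + l * z))%C).
    assert (Hg : forall p, Rabs (fst p - xs) + Rabs (snd p - ys) <= (W + L) / 2 ^ k ->
                 Cmod (g p) <= eps * ((W + L) / 2 ^ k)).
    { intros [px py] Hp. cbn [fst snd] in Hp.
      assert (Hc : Cmod ((px, py) - (xs, ys)) <= (W + L) / 2 ^ k).
      { eapply Rle_trans; [|exact Hp]. 
        replace ((px, py) - (xs, ys))%C with ((px - xs, py - ys) : C) by (unfold Cminus, Cplus, Copp; simpl; f_equal; ring).
        apply Cmod_le_abs. }
      unfold g, al.
      replace (f (px, py) - (f (xs, ys) - l * (xs, ys) + l * (px, py)))%C with
        (f (px, py) - f (xs, ys) - l * ((px, py) - (xs, ys)))%C by ring.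
      eapply Rle_trans. apply Hd. lra. apply Rmult_le_compat_l; lra. }
    unfold inrect in Ik.
    assert (Ef : Eint f (ra r) (rb r) (rc r) (rd r)) by (apply (Eint_sub f X1 X2 Y1 Y2 H); lra).
    assert (Eq : BR f r = B g (ra r) (rb r) (rc r) (rd r)).
    { unfold g. rewrite B_minus; auto. rewrite B_aff. unfold BR. ring. apply Eint_aff. }
    assert (Bd : Cmod (BR f r) <= 2 * ((rb r - ra r) + (rd r - rc r)) * (eps * ((W + L) / 2 ^ k))).
    { rewrite Eq. apply B_bound; try lra.
      - unfold g. apply B_minus_Eint; auto. apply Eint_aff.
      - intros x Hx. specialize (Hxs k). specialize (Hys k). fold r in Hxs, Hys.
        split; apply Hg; cbn [fst snd];
        (apply Rle_trans with ((rb r - ra r) + (rd r - rc r));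
         [apply Rplus_le_compat; apply Rabs_le; lra | rewrite Iw, Il; right; unfold W, L; field; lra]).
      - intros y Hy. specialize (Hxs k). specialize (Hys k). fold r in Hxs, Hys.
        split; apply Hg; cbn [fst snd];
        (apply Rle_trans with ((rb r - ra r) + (rd r - rc r));
         [apply Rplus_le_compat; apply Rabs_le; lra | rewrite Iw, Il; right; unfold W, L; field; lra]). }
    rewrite Iw, Il in Bd. fold W L in Bd.
    eapply Rle_trans. apply Ib.
    replace (2 * eps * (W + L) ^ 2) with (2 ^ k * 2 ^ k * (2 * (W / 2 ^ k + L / 2 ^ k) * (eps * ((W + L) / 2 ^ k))))
      by (field; lra).
    apply Rmult_le_compat_l. nra. exact Bd. }
  destruct (Req_dec (Cmod (B f X1 X2 Y1 Y2)) 0) as [E|E].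
  - apply Cmod_eq_0. exact E.
  - exfalso. assert (Hpos : 0 < Cmod (B f X1 X2 Y1 Y2)) by (assert (T := Cmod_ge_0 (B f X1 X2 Y1 Y2)); lra).
    set (c := Cmod (B f X1 X2 Y1 Y2)) in *.
    assert (Q : 0 <= (W + L) ^ 2) by (apply pow2_ge_0).
    specialize (Main (c / (4 * (W + L) ^ 2 + 1))).
    assert (0 < c / (4 * (W + L) ^ 2 + 1)) by (apply Rdiv_lt_0_compat; lra).
    specialize (Main H0).
    assert (2 * (c / (4 * (W + L) ^ 2 + 1)) * (W + L) ^ 2 < c).
    { replace (2 * (c / (4 * (W + L) ^ 2 + 1)) * (W + L) ^ 2) with (c * (2 * (W + L) ^ 2 / (4 * (W + L) ^ 2 + 1))) by (field; lra).
      rewrite <- (Rmult_1_r c) at 2. apply Rmult_lt_compat_l; auto.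
      apply Rmult_lt_reg_r with (4 * (W + L) ^ 2 + 1). lra.
      unfold Rdiv. rewrite Rmult_assoc, Rinv_l by lra. lra. }
    lra.
Qed.

Lemma Cdiff_of_derive_AR (f : C -> C) (z l : C) :
  is_derive (K := C_AbsRing) (V := AbsRing_NormedModule C_AbsRing) f z l ->
  forall eps, 0 < eps -> exists del, 0 < del /\ forall w, Cmod (w - z) < del ->
    Cmod (f w - f z - l * (w - z)) <= eps * Cmod (w - z).
Proof.
  intros [_ H] eps Heps.
  specialize (H z (fun P HP => HP) (mkposreal eps Heps)).
  destruct H as [del Hdel].
  exists del. split. apply cond_pos.
  intros w Hw.
  specialize (Hdel w Hw).
  change (Cmod (f w - f z - (w - z) * l) <= eps * Cmod (w - z)) in Hdel.
  replace (f w - f z - l * (w - z))%C with (f w - f z - (w - z) * l)%C by ring.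
  exact Hdel.
Qed.

Lemma AR_to_C (f : C -> C) (z l : C) :
  is_derive (K := C_AbsRing) (V := AbsRing_NormedModule C_AbsRing) f z l ->
  is_derive (K := C_AbsRing) (V := C_NormedModule) f z l.
Proof. intros H. apply derive_of_Cdiff. apply Cdiff_of_derive_AR. exact H. Qed.

Lemma C_to_AR (f : C -> C) (z l : C) :
  is_derive (K := C_AbsRing) (V := C_NormedModule) f z l ->
  is_derive (K := C_AbsRing) (V := AbsRing_NormedModule C_AbsRing) f z l.
Proof.
  intros H0. pose proof (Cdiff_of_derive f z l H0) as H.
  split. apply is_linear_scal_l.
  intros x Hx. apply (@is_filter_lim_locally_unique _ (AbsRing_NormedModule C_AbsRing)) in Hx. subst x.
  intros eps. destruct (H eps (cond_pos eps)) as [del [Hd H2]].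
  exists (mkposreal del Hd).
  intros w Hw. change (Cmod (w - z) < del) in Hw.
  change (Cmod (f w - f z - (w - z) * l) <= eps * Cmod (w - z)).
  replace (f w - f z - (w - z) * l)%C with (f w - f z - l * (w - z))%C by ring.
  apply H2. exact Hw.
Qed.

Lemma ex_derive_mq (u : C -> C) (z lu : C) : z <> 0%C -> is_derive (K := C_AbsRing) (V := C_NormedModule) u z lu ->
  ex_derive (K := C_AbsRing) (V := C_NormedModule) (fun w => u w * (/ w * / w))%C z.
Proof.
  intros Hz Hu. apply C_to_AR in Hu.
  assert (Hi := C_to_AR _ _ _ (is_derive_Cinv z Hz)).
  assert (Hq := is_derive_mult (K := C_AbsRing) (fun w => / w)%C (fun w => / w)%C z _ _ Hi Hi (fun a b => Cmult_comm a b)).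
  assert (Hp := is_derive_mult (K := C_AbsRing) u _ z _ _ Hu Hq (fun a b => Cmult_comm a b)).
  eexists. apply AR_to_C. exact Hp.
Qed.

Lemma is_derive_lin (d z : C) : is_derive (K := C_AbsRing) (V := C_NormedModule) (fun w => d * w)%C z d.
Proof.
  apply derive_of_Cdiff. intros eps Heps. exists 1. split. lra. intros w _.
  replace ((d * w - d * z - d * (w - z)))%C with (RtoC 0) by ring. rewrite Cmod_0.
  assert (0 <= Cmod (w - z)) by apply Cmod_ge_0. nra.
Qed.

Lemma pair_neq0_y x y : y <> 0 -> ((x, y) : C) <> 0%C.
Proof. intros H E. injection E. intros. auto. Qed.
Lemma pair_neq0_x x y : x <> 0 -> ((x, y) : C) <> 0%C.
Proof. intros H E. injection E. intros. auto. Qed.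


Lemma annulus_eq (h : C -> C) S s : 0 < s < S ->
  (forall x y, -S <= x <= S -> -S <= y <= S -> ((x, y) : C) <> 0%C -> ex_derive (K := C_AbsRing) h (x, y)) ->
  B h (-S) S (-S) S = B h (-s) s (-s) s.
Proof.
  intros Hs HD.
  assert (HC : forall x y, -S <= x <= S -> -S <= y <= S -> ((x, y) : C) <> 0%C -> Ccont h (x, y)).
  { intros x y Hx Hy Hn. destruct (HD _ _ Hx Hy Hn) as [l Hl]. eapply Ccont_of_derive; eauto. }
  rewrite (B_splity' h (-S) S (-S) (-s) S) by (try lra; intros; split; apply HC; try apply pair_neq0_x; lra).
  rewrite (B_splity' h (-S) S (-s) s S) by (try lra; intros; split; apply HC; try apply pair_neq0_x; lra).
  rewrite (B_splitx' h (-S) (-s) S (-s) s) by (try lra; intros; split; apply HC; try apply pair_neq0_y; lra).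
  rewrite (B_splitx' h (-s) s S (-s) s) by (try lra; intros; split; apply HC; try apply pair_neq0_y; lra).
  rewrite (goursat h (-S) S (-S) (-s)) by (try lra; intros; apply HD; try apply pair_neq0_y; lra).
  rewrite (goursat h (-S) S s S) by (try lra; intros; apply HD; try apply pair_neq0_y; lra).
  rewrite (goursat h (-S) (-s) (-s) s) by (try lra; intros; apply HD; try apply pair_neq0_x; lra).
  rewrite (goursat h s S (-s) s) by (try lra; intros; apply HD; try apply pair_neq0_x; lra).
  ring.
Qed.

Lemma bnd_pts s x y : 0 < s -> -s <= x <= s -> -s <= y <= s -> (x = -s \/ x = s \/ y = -s \/ y = s) ->
  s <= Cmod (x, y) <= 2 * s.
Proof.
  intros Hs Hx Hy Hb. split.
  - eapply Rle_trans; [|apply Rmax_Cmod]. cbn [fst snd].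
    destruct Hb as [E|[E|[E|E]]]; subst.
    + eapply Rle_trans; [|apply Rmax_l]. rewrite Rabs_Ropp, Rabs_right; lra.
    + eapply Rle_trans; [|apply Rmax_l]. rewrite Rabs_right; lra.
    + eapply Rle_trans; [|apply Rmax_r]. rewrite Rabs_Ropp, Rabs_right; lra.
    + eapply Rle_trans; [|apply Rmax_r]. rewrite Rabs_right; lra.
  - eapply Rle_trans. apply Cmod_le_abs.
    assert (Rabs x <= s) by (apply Rabs_le; lra). assert (Rabs y <= s) by (apply Rabs_le; lra). lra.
Qed.

Lemma Eint_sq f s : 0 < s ->
  (forall x y, -s <= x <= s -> -s <= y <= s -> s <= Cmod (x, y) -> Ccont f (x, y)) ->
  Eint f (-s) s (-s) s.
Proof.
  intros Hs H. split; [|split; [|split]].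
  - apply (ex_h f (-s) (-s) s); try lra. intros; apply H; try lra; apply bnd_pts; lra.
  - apply (ex_h f s (-s) s); try lra. intros; apply H; try lra; apply bnd_pts; lra.
  - apply (ex_v f (-s) (-s) s); try lra. intros; apply H; try lra; apply bnd_pts; lra.
  - apply (ex_v f s (-s) s); try lra. intros; apply H; try lra; apply bnd_pts; lra.
Qed.

Lemma B_bound_sq f s M : 0 < s ->
  (forall x y, -s <= x <= s -> -s <= y <= s -> s <= Cmod (x, y) -> Ccont f (x, y)) ->
  (forall x y, -s <= x <= s -> -s <= y <= s -> s <= Cmod (x, y) <= 2 * s -> Cmod (f (x, y)) <= M) ->
  Cmod (B f (-s) s (-s) s) <= 8 * s * M.
Proof.
  intros Hs HC HM.
  replace (8 * s * M) with (2 * ((s - - s) + (s - - s)) * M) by ring.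
  apply B_bound; try lra. apply Eint_sq; auto.
  - intros x Hx. split; apply HM; try lra; apply bnd_pts; lra.
  - intros y Hy. split; apply HM; try lra; apply bnd_pts; lra.
Qed.

Lemma phi_ex S : 0 < S -> ex_RInt (V := R_CompleteNormedModule) (fun t => 4 * S / (t ^ 2 + S ^ 2)) (-S) S.
Proof.
  intros HS. apply (ex_RInt_continuous (V := R_CompleteNormedModule)). intros z _.
  apply (ex_derive_continuous (K := R_AbsRing) (V := R_NormedModule) (fun t => 4 * S / (t ^ 2 + S ^ 2))).
  auto_derive. simpl; nra.
Qed.

Lemma phi_ge S : 0 < S -> 4 <= RInt (V := R_CompleteNormedModule) (fun t => 4 * S / (t ^ 2 + S ^ 2)) (-S) S.
Proof.
  intros HS.
  apply Rle_trans with (RInt (V := R_CompleteNormedModule) (fun _ => 2 / S) (-S) S).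
  - rewrite RInt_const. unfold scal; simpl. unfold mult; simpl. right. field. lra.
  - apply RInt_le. lra. apply ex_RInt_const. apply phi_ex; auto.
    intros t Ht. assert (0 < t ^ 2 + S ^ 2) by (simpl; nra). apply Rmult_le_reg_r with (S * (t ^ 2 + S ^ 2)). apply Rmult_lt_0_compat; lra.
    unfold Rdiv. 
    replace (2 * / S * (S * (t ^ 2 + S ^ 2))) with (2 * (t ^ 2 + S ^ 2)) by (field; lra).
    replace (4 * S * / (t ^ 2 + S ^ 2) * (S * (t ^ 2 + S ^ 2))) with (4 * S * S) by (field; lra).
    simpl. nra.
Qed.

Lemma inv_combo (t S : R) : 0 < S ->
  (/ (t, (-S)%R) + Ci * / (S, t) - / (t, S) - Ci * / ((-S)%R, t))%C = (0, 4 * S / (t ^ 2 + S ^ 2)).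
Proof.
  intros HS. assert (0 < t ^ 2 + S ^ 2) by (simpl; nra).
  unfold Cinv, Cmult, Cplus, Cminus, Copp, Ci. simpl. unfold Cplus; simpl. f_equal; field; simpl in H; nra.
Qed.

Lemma zero_int a b : is_RInt (V := R_NormedModule) (fun _ => 0) a b 0.
Proof.
  pose proof (is_RInt_const (V := R_NormedModule) a b 0) as H.
  change (is_RInt (V := R_NormedModule) (fun _ => 0) a b ((b - a) * 0)) in H.
  rewrite Rmult_0_r in H. exact H.
Qed.

Lemma crude (f : C -> C) (S : R) (d : C) : 0 < S ->
  (forall x y, -S <= x <= S -> -S <= y <= S -> ex_derive (K := C_AbsRing) f (x, y)) ->
  f (RtoC 0) = RtoC 0 -> is_derive (K := C_AbsRing) f (RtoC 0) d ->
  (forall x y, -S <= x <= S -> -S <= y <= S -> Cmod (f (x, y)) <= 1) ->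
  Cmod d <= 2 / S.
Proof.
  intros HS HD Hf0 Hd Hb.
  set (k1 := fun w => (f w * (/ w * / w))%C).
  set (k2 := fun w => (d * w * (/ w * / w))%C).
  set (h := fun w => (k1 w - k2 w)%C).
  assert (D1 : forall x y, -S <= x <= S -> -S <= y <= S -> ((x, y) : C) <> 0%C ->
     ex_derive (K := C_AbsRing) k1 (x, y)).
  { intros x y Hx Hy Hn. destruct (HD x y Hx Hy) as [l Hl]. exact (ex_derive_mq f _ _ Hn Hl). }
  assert (D2 : forall x y, ((x, y) : C) <> 0%C -> ex_derive (K := C_AbsRing) k2 (x, y)).
  { intros x y Hn. exact (ex_derive_mq (fun w => d * w)%C _ _ Hn (is_derive_lin d _)). }
  assert (Dh : forall x y, -S <= x <= S -> -S <= y <= S -> ((x, y) : C) <> 0%C ->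
     ex_derive (K := C_AbsRing) h (x, y)).
  { intros x y Hx Hy Hn. destruct (D1 x y Hx Hy Hn) as [l1 H1]. destruct (D2 x y Hn) as [l2 H2].
    exists (minus l1 l2). exact (is_derive_minus (K := C_AbsRing) (V := C_NormedModule) k1 k2 _ _ _ H1 H2). }
  assert (NZ : forall s x y, 0 < s -> s <= Cmod (x, y) -> ((x, y) : C) <> 0%C).
  { intros s x y Hs Hc E. rewrite E, Cmod_0 in Hc. lra. }
  assert (HA : B h (-S) S (-S) S = 0%C).
  { apply Cmod_eq_0. apply Rle_antisym; [|apply Cmod_ge_0].
    apply Rnot_lt_le. intros Hpos.
    set (eps := Cmod (B h (-S) S (-S) S) / 16).
    assert (Heps : 0 < eps) by (unfold eps; lra).
    destruct (Cdiff_of_derive f (RtoC 0) d Hd eps Heps) as [del [Hdel Hdl]].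
    set (s := Rmin (S / 2) (del / 4)).
    assert (Hs : 0 < s) by (apply Rmin_pos; lra).
    assert (Hs1 : s <= S / 2) by apply Rmin_l.
    assert (Hs2 : s <= del / 4) by apply Rmin_r.
    assert (E := annulus_eq h S s ltac:(lra) Dh).
    assert (Bd : Cmod (B h (-s) s (-s) s) <= 8 * s * (eps / s)).
    { apply B_bound_sq; auto.
      - intros x y Hx Hy Hc. destruct (Dh x y ltac:(lra) ltac:(lra) (NZ s x y Hs Hc)) as [l Hl].
        eapply Ccont_of_derive; eauto.
      - intros x y Hx Hy [Hc1 Hc2].
        assert (Hn := NZ s x y Hs Hc1).
        assert (Hp : 0 < Cmod (x, y)) by lra.
        unfold h, k1, k2.
        replace (f (x, y) * (/ (x, y) * / (x, y)) - d * (x, y) * (/ (x, y) * / (x, y)))%C with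
          ((f (x, y) - f (RtoC 0) - d * ((x, y) - RtoC 0)) * (/ (x, y) * / (x, y)))%C
          by (rewrite Hf0; ring).
        rewrite !Cmod_mult, !Cmod_inv by auto.
        assert (Hl : Cmod ((x, y) - RtoC 0) < del).
        { assert (Hz : forall p : C, (p - RtoC 0)%C = p) by (intros; ring). rewrite Hz. lra. }
        specialize (Hdl _ Hl). assert (Hz : forall p : C, (p - RtoC 0)%C = p) by (intros; ring). rewrite Hz in Hdl. rewrite Hz.
        apply Rle_trans with (eps * Cmod (x, y) * (/ Cmod (x, y) * / Cmod (x, y))).
        + apply Rmult_le_compat_r; [|exact Hdl].
          assert (0 < / Cmod (x, y)) by (apply Rinv_0_lt_compat; auto). nra.
        + replace (eps * Cmod (x, y) * (/ Cmod (x, y) * / Cmod (x, y))) with (eps / Cmod (x, y)) by (field; lra).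
          unfold Rdiv. apply Rmult_le_compat_l; [lra|]. apply Rinv_le_contravar; lra. }
    replace (8 * s * (eps / s)) with (8 * eps) in Bd by (field; lra).
    unfold eps in Bd. rewrite E in Bd, Hpos. lra. }
  assert (CC1 : forall x y, -S <= x <= S -> -S <= y <= S -> S <= Cmod (x, y) -> Ccont k1 (x, y)).
  { intros x y Hx Hy Hc. destruct (D1 x y Hx Hy (NZ S x y HS Hc)) as [l Hl]. eapply Ccont_of_derive; eauto. }
  assert (CC2 : forall x y, -S <= x <= S -> -S <= y <= S -> S <= Cmod (x, y) -> Ccont k2 (x, y)).
  { intros x y Hx Hy Hc. destruct (D2 x y (NZ S x y HS Hc)) as [l Hl]. eapply Ccont_of_derive; eauto. }
  assert (E1 := Eint_sq k1 S HS CC1). assert (E2 := Eint_sq k2 S HS CC2).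
  assert (HB : B k1 (-S) S (-S) S = B k2 (-S) S (-S) S).
  { assert (T := B_minus k1 k2 (-S) S (-S) S E1 E2). change (B h (-S) S (-S) S = (B k1 (-S) S (-S) S - B k2 (-S) S (-S) S)%C) in T.
    rewrite HA in T. 
    replace (B k1 (-S) S (-S) S) with (B k1 (-S) S (-S) S - B k2 (-S) S (-S) S + B k2 (-S) S (-S) S)%C by ring.
    rewrite <- T. ring. }
  set (Phi := RInt (V := R_CompleteNormedModule) (fun t => 4 * S / (t ^ 2 + S ^ 2)) (-S) S).
  assert (HC : B k2 (-S) S (-S) S = (d * (0, Phi))%C).
  { destruct E2 as [e1 [e2 [e3 e4]]].
    assert (I1 := RInt_correct _ _ _ e1).
    assert (I2 := is_RInt_Cmult _ _ _ _ Ci (RInt_correct _ _ _ e4)).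
    assert (I3 := RInt_correct _ _ _ e2).
    assert (I4 := is_RInt_Cmult _ _ _ _ Ci (RInt_correct _ _ _ e3)).
    assert (J := is_RInt_minus (V := C_R_NormedModule) _ _ _ _ _ _
                 (is_RInt_minus (V := C_R_NormedModule) _ _ _ _ _ _
                   (is_RInt_plus (V := C_R_NormedModule) _ _ _ _ _ _ I1 I2) I3) I4).
    assert (K0 := pair_int (fun t => (0, 4 * S / (t ^ 2 + S ^ 2))) (-S) S _ _
                 (zero_int (-S) S)
                 (RInt_correct (V := R_CompleteNormedModule) _ _ _ (phi_ex S HS))).
    assert (K := is_RInt_Cmult _ _ _ _ d K0).
    fold Phi in K.
    assert (Hinv : forall w : C, w <> 0%C -> (w * (/ w * / w))%C = (/ w)%C) by (intros; field; auto).
    assert (K' : is_RInt (V := C_R_NormedModule)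
       (fun t => minus (minus (plus (k2 (t, (-S)%R)) (Ci * k2 (S, t))%C) (k2 (t, S))) (Ci * k2 ((-S)%R, t))%C)
       (-S) S (d * (0, Phi))%C).
    { eapply is_RInt_ext; [|exact K]. intros t _. 
      change (d * (0, (4 * S / (t ^ 2 + S ^ 2))%R) = k2 (t, (-S)%R) + Ci * k2 (S, t) - k2 (t, S) - Ci * k2 ((-S)%R, t))%C.
      unfold k2. rewrite <- !Cmult_assoc.
      rewrite !Hinv by (first [apply pair_neq0_y; lra | apply pair_neq0_x; lra]).
      rewrite <- inv_combo by lra. ring. }
    assert (U1 := is_RInt_unique (V := C_R_CompleteNormedModule) _ _ _ _ J).
    assert (U2 := is_RInt_unique (V := C_R_CompleteNormedModule) _ _ _ _ K').
    etransitivity; [symmetry; exact U1|]. exact U2. }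
  assert (HE : Cmod (B k1 (-S) S (-S) S) <= 8 * S * (/ S * / S)).
  { apply B_bound_sq; auto. intros x y Hx Hy [Hc1 Hc2].
    assert (Hn := NZ S x y HS Hc1).
    unfold k1. rewrite !Cmod_mult, !Cmod_inv by auto.
    assert (0 < / Cmod (x, y)) by (apply Rinv_0_lt_compat; lra).
    assert (/ Cmod (x, y) <= / S) by (apply Rinv_le_contravar; lra).
    assert (0 <= Cmod (f (x, y))) by apply Cmod_ge_0.
    assert (Cmod (f (x, y)) <= 1) by (apply Hb; auto).
    assert (/ Cmod (x, y) * / Cmod (x, y) <= / S * / S) by (apply Rmult_le_compat; lra).
    assert (0 <= / Cmod (x, y) * / Cmod (x, y)) by nra.
    nra. }
  rewrite HB, HC in HE. rewrite Cmod_mult in HE.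
  assert (HP : Cmod (0, Phi) = Phi).
  { replace ((0, Phi) : C) with (Ci * RtoC Phi)%C by (unfold Ci, RtoC, Cmult; simpl; f_equal; ring).
    rewrite Cmod_mult, Cmod_Ci, Cmod_R. rewrite Rabs_right. ring. assert (T := phi_ge S HS). fold Phi in T. lra. }
  rewrite HP in HE. assert (T := phi_ge S HS). fold Phi in T.
  assert (0 <= Cmod d) by apply Cmod_ge_0.
  replace (8 * S * (/ S * / S)) with (8 / S) in HE by (field; lra).
  apply Rmult_le_reg_r with 4. lra.
  replace (2 / S * 4) with (8 / S) by (field; lra). nra.
Qed.

Lemma pow_lt_mono a b n : 0 <= a < b -> (0 < n)%nat -> a ^ n < b ^ n.
Proof.
  intros Hab Hn. destruct n as [|m]. lia. simpl.
  assert (a ^ m <= b ^ m) by (apply pow_incr; lra).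
  assert (0 < b ^ m) by (apply pow_lt; lra).
  assert (0 <= a ^ m) by (apply pow_le; lra). nra.
Qed.

Lemma bern t k : 0 <= t -> 1 + INR k * t <= (1 + t) ^ k.
Proof.
  intros Ht. induction k. simpl. lra. rewrite S_INR. simpl.
  assert (0 <= INR k) by apply pos_INR. nra.
Qed.

Lemma pow_bounded a : 0 <= a -> (forall k, a ^ k <= 5) -> a <= 1.
Proof.
  intros Ha H. apply Rnot_lt_le. intros Hlt.
  destruct (archimed_cor1 ((a - 1) / 5)) as [k [Hk Hk0]]. apply Rdiv_lt_0_compat; lra.
  assert (B1 := bern (a - 1) k ltac:(lra)). replace (1 + (a - 1)) with a in B1 by ring.
  specialize (H k).
  assert (0 < INR k) by (apply lt_0_INR; lia).
  assert (5 < INR k * (a - 1)).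
  { apply Rmult_lt_reg_r with (/ INR k). apply Rinv_0_lt_compat; auto.
    replace (INR k * (a - 1) * / INR k) with (a - 1) by (field; lra).
    apply Rmult_lt_reg_r with (/ 5). lra.
    replace (5 * / INR k * / 5) with (/ INR k) by (field; lra). exact Hk. }
  lra.
Qed.

Lemma is_derive_aff (a b z : C) : is_derive (K := C_AbsRing) (V := C_NormedModule) (fun w => a + b * w)%C z b.
Proof.
  apply derive_of_Cdiff. intros eps Heps. exists 1. split. lra. intros w _.
  replace ((a + b * w - (a + b * z) - b * (w - z)))%C with (RtoC 0) by ring. rewrite Cmod_0.
  assert (0 <= Cmod (w - z)) by apply Cmod_ge_0. nra.
Qed.

Fixpoint Dp (a b : C) (n : nat) (w : C) : C :=
  match n with O => RtoC 0 | S m => (b * Cpow (a + b * w) m + (a + b * w) * Dp a b m w)%C end.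

Lemma is_derive_powaff (a b : C) n (w : C) :
  is_derive (K := C_AbsRing) (V := C_NormedModule) (fun w => Cpow (a + b * w) n) w (Dp a b n w).
Proof.
  induction n as [|n IH].
  - simpl. apply derive_of_Cdiff. intros eps Heps. exists 1. split. lra. intros v _.
    replace (1 - 1 - 0 * (v - w))%C with (RtoC 0) by ring. rewrite Cmod_0.
    assert (0 <= Cmod (v - w)) by apply Cmod_ge_0. nra.
  - apply AR_to_C.
    assert (H := is_derive_mult (K := C_AbsRing) (fun w => a + b * w)%C (fun w => Cpow (a + b * w) n) w _ _
       (C_to_AR _ _ _ (is_derive_aff a b w)) (C_to_AR _ _ _ IH) (fun x y => Cmult_comm x y)).
    eapply is_derive_ext; [|exact H]. intros t. reflexivity.
Qed.

Lemma Dp_at0 (b : C) n : Dp (RtoC 1) b n (RtoC 0) = (RtoC (INR n) * b)%C.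
Proof.
  induction n as [|n IH].
  - simpl. ring.
  - change (Dp (RtoC 1) b (S n) (RtoC 0)) with
      (b * Cpow (RtoC 1 + b * RtoC 0) n + (RtoC 1 + b * RtoC 0) * Dp (RtoC 1) b n (RtoC 0))%C.
    rewrite IH. replace (RtoC 1 + b * RtoC 0)%C with (RtoC 1) by ring. rewrite Cpow_1_l.
    rewrite S_INR, RtoC_plus. ring.
Qed.

Fixpoint it (F : C -> C) (k : nat) (w : C) : C := match k with O => w | S k => F (it F k w) end.

Lemma key (r : R) (n : nat) (g : C -> C) (d : C) : 1 < r -> (0 < n)%nat ->
  holomorphic_on (annulus (r ^ n)) g -> (forall z, annulus (r ^ n) z -> unit_disc (g z)) ->
  g (RtoC 1) = RtoC 0 -> is_derive (K := C_AbsRing) g (RtoC 1) d ->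
  Cmod d <= / INR n * (r / (r - 1)).
Proof.
  intros Hr Hn Hhol Hmap Hg1 Hd.
  set (rho := 1 - / r).
  assert (Hir : 0 < / r < 1) by (split; [apply Rinv_0_lt_compat; lra | rewrite <- Rinv_1; apply Rinv_lt_contravar; lra]).
  assert (Hrho : 0 < rho < 1) by (unfold rho; lra).
  assert (Hr2 : 1 + rho <= r).
  { unfold rho. apply Rmult_le_reg_r with r. lra.
    replace ((1 + (1 - / r)) * r) with (2 * r - 1) by (field; lra). nra. }
  set (P := fun w => Cpow (RtoC 1 + RtoC rho * w) n).
  assert (HPann : forall w, Cmod w < 1 -> annulus (r ^ n) (P w)).
  { intros w Hw. unfold annulus, P. rewrite Cmod_pow.
    assert (Hm : 0 <= Cmod w) by apply Cmod_ge_0.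
    assert (U : Cmod (RtoC 1 + RtoC rho * w) < r).
    { eapply Rle_lt_trans. apply Cmod_triangle. rewrite Cmod_mult, !Cmod_R.
      rewrite Rabs_R1, (Rabs_right rho) by lra. nra. }
    assert (L : / r < Cmod (RtoC 1 + RtoC rho * w)).
    { assert (T := Cmod_sub_ge (RtoC 1 + RtoC rho * w) (RtoC 1)).
      replace (RtoC 1 + RtoC rho * w - RtoC 1)%C with (RtoC rho * w)%C in T by ring.
      rewrite Cmod_mult, !Cmod_R, Rabs_R1, (Rabs_right rho) in T by lra. 
      unfold rho in *. nra. }
    split.
    - rewrite <- pow_inv. apply pow_lt_mono; auto. lra.
    - apply pow_lt_mono; auto. split; [apply Cmod_ge_0|]. auto. }
  set (F := fun w => g (P w)).
  assert (DP : forall w, is_derive (K := C_AbsRing) P w (Dp (RtoC 1) (RtoC rho) n w)).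
  { intros w. apply is_derive_powaff. }
  assert (DerF : forall w, Cmod w < 1 -> exists l, is_derive (K := C_AbsRing) F w l).
  { intros w Hw. destruct (Hhol _ (HPann w Hw)) as [dg Hdg].
    exists (scal (Dp (RtoC 1) (RtoC rho) n w) dg).
    exact (is_derive_comp g P w dg _ Hdg (C_to_AR _ _ _ (DP w))). }
  assert (HP0 : P (RtoC 0) = RtoC 1).
  { unfold P. replace (RtoC 1 + RtoC rho * RtoC 0)%C with (RtoC 1) by ring. apply Cpow_1_l. }
  assert (F0 : F (RtoC 0) = RtoC 0) by (unfold F; rewrite HP0; exact Hg1).
  set (lam := (RtoC (INR n) * RtoC rho * d)%C).
  assert (DF0 : is_derive (K := C_AbsRing) F (RtoC 0) lam).
  { rewrite <- HP0 in Hd.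
    assert (H := is_derive_comp g P (RtoC 0) d _ Hd (C_to_AR _ _ _ (DP (RtoC 0)))).
    rewrite Dp_at0 in H. exact H. }
  assert (Fdisc : forall w, Cmod w < 1 -> Cmod (F w) < 1).
  { intros w Hw. apply Hmap. apply HPann. auto. }
  assert (Inv : forall k, (forall w, Cmod w < 1 -> Cmod (it F k w) < 1 /\ ex_derive (K := C_AbsRing) (it F k) w) /\
     it F k (RtoC 0) = RtoC 0 /\ is_derive (K := C_AbsRing) (it F k) (RtoC 0) (Cpow lam k)).
  { induction k as [|k [IH1 [IH2 IH3]]].
    - split; [|split].
      + intros w Hw. split; auto. exists one. apply AR_to_C. exact (is_derive_id (K := C_AbsRing) w).
      + reflexivity.
      + apply AR_to_C. exact (is_derive_id (K := C_AbsRing) (RtoC 0)).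
    - split; [|split].
      + intros w Hw. destruct (IH1 w Hw) as [Hk [dk Hdk]]. split.
        * simpl. apply Fdisc. auto.
        * destruct (DerF _ Hk) as [dF HdF].
          exists (scal dk dF). exact (is_derive_comp F (it F k) w dF dk HdF (C_to_AR _ _ _ Hdk)).
      + simpl. rewrite IH2. exact F0.
      + rewrite <- IH2 in DF0.
        assert (H := is_derive_comp F (it F k) (RtoC 0) lam _ DF0 (C_to_AR _ _ _ IH3)).
        assert (E : Cpow lam (S k) = (Cpow lam k * lam)%C) by (simpl; ring).
        rewrite E. exact H. }
  assert (Hlam : Cmod lam <= 1).
  { apply pow_bounded. apply Cmod_ge_0. intros k. rewrite <- Cmod_pow.
    destruct (Inv k) as [I1 [I2 I3]].
    replace 5 with (2 / (2 / 5)) by field.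
    apply (crude (it F k) (2 / 5)); auto. lra.
    - intros x y Hx Hy. apply I1. eapply Rle_lt_trans. apply Cmod_le_abs.
      assert (Rabs x <= 2 / 5) by (apply Rabs_le; lra). assert (Rabs y <= 2 / 5) by (apply Rabs_le; lra). lra.
    - intros x y Hx Hy. left. apply I1. eapply Rle_lt_trans. apply Cmod_le_abs.
      assert (Rabs x <= 2 / 5) by (apply Rabs_le; lra). assert (Rabs y <= 2 / 5) by (apply Rabs_le; lra). lra. }
  unfold lam in Hlam. rewrite !Cmod_mult, !Cmod_R in Hlam.
  assert (HnR : 0 < INR n) by (apply lt_0_INR; lia).
  rewrite (Rabs_right (INR n)), (Rabs_right rho) in Hlam by lra.
  replace (/ INR n * (r / (r - 1))) with (1 / (INR n * rho)) by (unfold rho; field; lra).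
  apply Rmult_le_reg_l with (INR n * rho). nra.
  replace (INR n * rho * (1 / (INR n * rho))) with 1 by (field; lra). lra.
Qed.

Theorem lemma3 (r : R) (n : nat) (hr : 1 < r) (hn : (0 < n)%nat) :
  Rbar_le (carath (r ^ n)) (Finite (/ INR n * (r / (r - 1)))).
Proof.
  unfold carath. destruct (Lub_Rbar_correct (carath_values (r ^ n))) as [_ Hl].
  apply Hl. intros x [g [d [H1 [H2 [H3 [H4 ->]]]]]]. simpl.
  exact (key r n g d hr hn H1 H2 H3 H4).
Qed.
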